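(* Let $\alpha,\beta>0$, let $c(\psi)=\sqrt{\alpha\cos^2\psi+\beta\sin^2\psi}$, let $p\ge0$ be an integer, let $C>0$ and $\theta\ge1/2$, and let $X_{\Delta x}^p(\Omega)$ be the discontinuous piecewise polynomial space on the periodic mesh described in the context. Suppose $v,w,\psi:[0,T]\to X_{\Delta x}^p(\Omega)$ are differentiable in time and, for every $t\in[0,T]$, satisfy (with $c=c(\psi(x,t))$ inside integrals, $x$-derivatives taken cellwise, sums over $j=1,\dots,N$) $$\sum_j\int_{\Omega_j}v_t\phi\,dx+\sum_j\int_{\Omega_j}c\,w\phi_x\,dx-\sum_j\Big(\overline{c}_{j+1/2}\overline{w}_{j+1/2}+\tfrac12 s_{j+1/2}\llbracket v\rrbracket_{j+1/2}\Big)\phi^-_{j+1/2}+\sum_j\Big(\overline{c}_{j-1/2}\overline{w}_{j-1/2}+\tfrac12 s_{j-1/2}\llbracket v\rrbracket_{j-1/2}\Big)\phi^+_{j-1/2}$$ $$=\sum_j\int_{\Omega_j}c\,(w\phi)_x\,dx-\sum_j\overline{c}_{j+1/2}w^-_{j+1/2}\phi^-_{j+1/2}+\sum_j\overline{c}_{j-1/2}w^+_{j-1/2}\phi^+_{j-1/2}-\sum_j\varepsilon_j\int_{\Omega_j}v_x\phi_x\,dx$$ for all $\phi\in X_{\Delta x}^p(\Omega)$, $$\sum_j\int_{\Omega_j}w_t\eta\,dx+\sum_j\int_{\Omega_j}c\,v\eta_x\,dx-\sum_j\Big(\overline{c}_{j+1/2}\overline{v}_{j+1/2}+\tfrac12 s_{j+1/2}\llbracket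 w\rrbracket_{j+1/2}\Big)\eta^-_{j+1/2}+\sum_j\Big(\overline{c}_{j-1/2}\overline{v}_{j-1/2}+\tfrac12 s_{j-1/2}\llbracket w\rrbracket_{j-1/2}\Big)\eta^+_{j-1/2}=-\sum_j\varepsilon_j\int_{\Omega_j}w_x\eta_x\,dx$$ for all $\eta\in X_{\Delta x}^p(\Omega)$, and $\sum_j\int_{\Omega_j}\psi_t\zeta\,dx=\sum_j\int_{\Omega_j}v\zeta\,dx$ for all $\zeta\in X_{\Delta x}^p(\Omega)$. Here $s_{j+1/2}=\max\{c^-_{j+1/2},c^+_{j+1/2}\}$ and $$\varepsilon_j=\frac{\Delta x_j\,C\,\big(\int_{\Omega_j}\mathrm{Res}^2\,dx\big)^{1/2}}{\big(\int_{\Omega_j}(v_x^2+w_x^2)\,dx\big)^{1/2}+\Delta x_j^\theta},\qquad \mathrm{Res}=(v^2+w^2)_t-\big(2c(\psi)vw\big)_x.$$ Then $$\frac{d}{dt}\left(\sum_{j=1}^N\int_{\Omega_j}\frac{v^2+w^2}{2}\,dx\right)\le 0.$$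
   Context: The domain $\Omega$ is partitioned into cells $\Omega_j=[x_{j-1/2},x_{j+1/2}]$, $j=1,\dots,N$, with $\Delta x_j=x_{j+1/2}-x_{j-1/2}$. $X_{\Delta x}^p(\Omega)=\{u\in L^2(\Omega): u|_{\Omega_j}$ is a polynomial of degree $\le p$ for each $j\}$. For a grid function $u$, $u^+_{j+1/2}$ and $u^-_{j+1/2}$ denote its traces at $x_{j+1/2}$ from the right and left respectively; $\overline{u}_{j+1/2}=(u^+_{j+1/2}+u^-_{j+1/2})/2$ and $\llbracket u\rrbracket_{j+1/2}=u^+_{j+1/2}-u^-_{j+1/2}$. Also $c^\pm_{j+1/2}=c(\psi^\pm_{j+1/2})$ and $\overline{c}_{j+1/2}=(c^+_{j+1/2}+c^-_{j+1/2})/2$. Periodic boundary conditions: the endpoints $x_{1/2}$ and $x_{N+1/2}$ are identified, i.e. $u^-_{1/2}:=u^-_{N+1/2}$ (trace from cell $N$) and $u^+_{N+1/2}:=u^+_{1/2}$ (trace from cell $1$), for all grid functions including $\psi$ and the test functions. *)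

(* Defs.v *)
From HB Require Import structures.
From mathcomp Require Import all_boot all_order all_algebra.
From mathcomp Require Import all_classical all_reals all_analysis.
Set Implicit Arguments. Unset Strict Implicit. Unset Printing Implicit Defensive.
Import Order.TTheory GRing.Theory Num.Theory.
Import numFieldNormedType.Exports.
Local Open Scope classical_set_scope.
Local Open Scope ring_scope.

(* Mesh: nodes xn k = x_{k+1/2}, k = 0..N (0-based).  Cell j : 'I_N (0-based)
   is Omega_{j+1} = [xn j, xn j.+1]. *)

Definition cspeed (R : realType) (alpha beta psi : R) : R :=
  Num.sqrt (alpha * cos psi ^+ 2 + beta * sin psi ^+ 2).

Definition dx (R : realType) (N : nat) (xn : nat -> R) (j : 'I_N) : R :=
  xn j.+1 - xn j.

Definition cint (R : realType) (N : nat) (xn : nat -> R) (j : 'I_N) (f : R -> R) : R :=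
  Rintegral lebesgue_measure `[xn j, xn j.+1] f.

Definition inX (R : realType) (N p : nat) (u : 'I_N -> {poly R}) : Prop :=
  forall j, (size (u j) <= p.+1)%N.

(* Interface i : 'I_N denotes x_{i+1/2} (0-based), the right end of cell i;
   by periodicity the left end of cell j is interface (ord_pred j).
   Traces at interface i: minus from cell i, plus from cell (ordS i). *)
Definition trm (R : realType) (N : nat) (xn : nat -> R) (u : 'I_N -> {poly R}) (i : 'I_N) : R :=
  (u i).[xn i.+1].
Definition trp (R : realType) (N : nat) (xn : nat -> R) (u : 'I_N -> {poly R}) (i : 'I_N) : R :=
  (u (ordS i)).[xn (ordS i)].
Definition avg (R : realType) (N : nat) (xn : nat -> R) (u : 'I_N -> {poly R}) (i : 'I_N) : R :=
  (trp xn u i + trm xn u i) / 2.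
Definition jump (R : realType) (N : nat) (xn : nat -> R) (u : 'I_N -> {poly R}) (i : 'I_N) : R :=
  trp xn u i - trm xn u i.

Definition cbar (R : realType) (alpha beta : R) (N : nat) (xn : nat -> R)
  (psi : 'I_N -> {poly R}) (i : 'I_N) : R :=
  (cspeed alpha beta (trp xn psi i) + cspeed alpha beta (trm xn psi i)) / 2.
Definition sspeed (R : realType) (alpha beta : R) (N : nat) (xn : nat -> R)
  (psi : 'I_N -> {poly R}) (i : 'I_N) : R :=
  Num.max (cspeed alpha beta (trm xn psi i)) (cspeed alpha beta (trp xn psi i)).

Definition dt (R : realType) (N : nat) (u : R -> 'I_N -> {poly R}) (t : R) (j : 'I_N) (x : R) : R :=
  derive1 (fun s => (u s j).[x]) t.

Definition Res (R : realType) (alpha beta : R) (N : nat)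
  (v w psi : R -> 'I_N -> {poly R}) (t : R) (j : 'I_N) (x : R) : R :=
  derive1 (fun s => (v s j).[x] ^+ 2 + (w s j).[x] ^+ 2) t
  - derive1 (fun y => 2 * cspeed alpha beta (psi t j).[y] * (v t j).[y] * (w t j).[y]) x.

Definition eps (R : realType) (alpha beta C theta : R) (N : nat) (xn : nat -> R)
  (v w psi : R -> 'I_N -> {poly R}) (t : R) (j : 'I_N) : R :=
  dx xn j * C * Num.sqrt (cint xn j (fun x => Res alpha beta v w psi t j x ^+ 2))
  / (Num.sqrt (cint xn j (fun x => (deriv (v t j)).[x] ^+ 2 + (deriv (w t j)).[x] ^+ 2))
     + powR (dx xn j) theta).

Definition energy (R : realType) (N : nat) (xn : nat -> R) (v w : R -> 'I_N -> {poly R}) (t : R) : R :=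
  \sum_(j < N) cint xn j (fun x => ((v t j).[x] ^+ 2 + (w t j).[x] ^+ 2) / 2).

(* Main.v *)
Require Import Defs.
From HB Require Import structures.
From mathcomp Require Import all_boot all_order all_algebra.
From mathcomp Require Import all_classical all_reals all_analysis.
Import Order.TTheory GRing.Theory Num.Theory.
Import numFieldNormedType.Exports.
Local Open Scope classical_set_scope.
Local Open Scope ring_scope.

From mathcomp Require Import ring lra.
Section H.
Variable R : realType.
Variable N : nat.
Variable xn : nat -> R.
Variable j : 'I_N.

Lemma cont_int (f : R -> R) : continuous f ->
  lebesgue_measure.-integrable `[xn j, xn j.+1] (EFin \o f).
Proof.
move=> cf; apply: continuous_compact_integrable; first exact: segment_compact.
by apply: continuous_subspaceT.
Qed.

Lemma cintD (f g : R -> R) : continuous f -> continuous g ->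
  cint xn j (fun x => f x + g x) = cint xn j f + cint xn j g.
Proof. by move=> cf cg; rewrite /cint RintegralD //; apply: cont_int. Qed.

Lemma cintZ (f : R -> R) r : continuous f ->
  cint xn j (fun x => r * f x) = r * cint xn j f.
Proof. by move=> cf; rewrite /cint RintegralZl //; apply: cont_int. Qed.

Lemma cont_sum n (F : 'I_n -> R -> R) : (forall i, continuous (F i)) ->
  continuous (fun x => \sum_(i < n) F i x).
Proof.
elim: n F => [|n IH] F cF.
  by under eq_fun do rewrite big_ord0; apply: cst_continuous.
under eq_fun do rewrite big_ord_recr /=.
move=> x; apply: continuousD; first exact: (IH (fun i => F (widen_ord (leqnSn n) i))).
exact: cF.
Qed.

Lemma cint_sum n (F : 'I_n -> R -> R) : (forall i, continuous (F i)) ->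
  cint xn j (fun x => \sum_(i < n) F i x) = \sum_(i < n) cint xn j (F i).
Proof.
elim: n F => [|n IH] F cF.
  under eq_fun do rewrite big_ord0.
  by rewrite big_ord0 /cint Rintegral_cst // mul0r.
under eq_fun do rewrite big_ord_recr /=.
rewrite big_ord_recr /= cintD //; last first.
  apply: cont_sum => i; exact: cF.
by rewrite (IH (fun i => F (widen_ord (leqnSn n) i))).
Qed.

Lemma contM (f g : R -> R) : continuous f -> continuous g ->
  continuous (fun x => f x * g x).
Proof. by move=> cf cg x; apply: cvgM; [exact: cf | exact: cg]. Qed.

Lemma contZX (c : R) i : continuous (fun x : R => c * x ^+ i).
Proof. apply: contM; [exact: cst_continuous | exact: exprn_continuous]. Qed.

Lemma cint_bil n (a b : nat -> R) :
  cint xn j (fun x => (\sum_(k < n) a k * x ^+ k) * (\sum_(l < n) b l * x ^+ l))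
  = \sum_(k < n) \sum_(l < n) a k * b l * cint xn j (fun x => x ^+ (k + l)).
Proof.
have E x : (\sum_(k < n) a k * x ^+ k) * (\sum_(l < n) b l * x ^+ l) =
   \sum_(k < n) \sum_(l < n) (a k * b l) * x ^+ (k + l).
  rewrite mulr_suml; apply: eq_bigr => k _; rewrite mulr_sumr; apply: eq_bigr => l _.
  by rewrite exprD mulrACA.
under eq_fun do rewrite E.
rewrite cint_sum; last by move=> k; apply: cont_sum => l; apply: contZX.
apply: eq_bigr => k _; rewrite cint_sum; last by move=> l; apply: contZX.
by apply: eq_bigr => l _; rewrite cintZ //; apply: exprn_continuous.
Qed.


Lemma isd_eq (f g : R -> R) (t df dg : R) : f = g -> df = dg -> is_derive t 1 f df -> is_derive t 1 g dg.
Proof. by move=> -> ->. Qed.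

Lemma isdM (f g : R -> R) (t df dg : R) : is_derive t 1 f df -> is_derive t 1 g dg ->
  is_derive t 1 (fun s => f s * g s) (df * g t + f t * dg).
Proof.
move=> hf hg; have := is_deriveM hf hg; apply: isd_eq => //.
by rewrite /GRing.scale /= addrC mulrC.
Qed.

Lemma isdMc (f : R -> R) (c t df : R) : is_derive t 1 f df ->
  is_derive t 1 (fun s => f s * c) (df * c).
Proof.
move=> hf; have := @isdM f (fun=> c) t df 0 hf (is_derive_cst (c : R^o) t 1); apply: isd_eq => //.
by rewrite mulr0 addr0.
Qed.

Lemma isdD (f g : R -> R) (t df dg : R) : is_derive t 1 f df -> is_derive t 1 g dg ->
  is_derive t 1 (fun s => f s + g s) (df + dg).
Proof. by move=> hf hg; have := is_deriveD hf hg; apply: isd_eq. Qed.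

Lemma isdsum n (h : 'I_n -> R -> R) (t : R) (dh : 'I_n -> R) : (forall i, is_derive t 1 (h i) (dh i)) ->
  is_derive t 1 (fun s => \sum_(i < n) h i s) (\sum_(i < n) dh i).
Proof.
move=> hh; have := is_derive_sum hh; apply: isd_eq => //.
by apply/funext => s; rewrite fct_sumE.
Qed.

Section PD.
Variables (V : R -> {poly R}) (n : nat) (t : R).
Hypothesis hs : forall s, (size (V s) <= n)%N.
Hypothesis hd : forall k, derivable (fun s => (V s)`_k) t 1.
Definition Vt := \poly_(k < n) derive1 (fun s => (V s)`_k) t.

Lemma szVt : (size Vt <= n)%N.
Proof. exact: size_poly. Qed.

Lemma coef_isd k : is_derive t 1 (fun s => (V s)`_k) (Vt`_k).
Proof.
rewrite coef_poly; case: ltnP => hk.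
  by rewrite derive1E; apply: derivableP.
have -> : (fun s => (V s)`_k) = cst 0.
  by apply/funext => s; rewrite nth_default // (leq_trans (hs s)).
exact: is_derive_cst.
Qed.

Lemma hor_isd x : is_derive t 1 (fun s => (V s).[x]) Vt.[x].
Proof.
have E : (fun s => (V s).[x]) = (fun s => \sum_(k < n) (V s)`_k * x ^+ k).
  by apply/funext => s; rewrite (horner_coef_wide x (hs s)).
rewrite E (horner_coef_wide x (size_poly n _)).
by apply: isdsum => k; apply: isdMc; apply: coef_isd.
Qed.

Lemma en_isd : is_derive t 1 (fun s => cint xn j (fun x => (V s).[x] ^+ 2 / 2))
   (cint xn j (fun x => Vt.[x] * (V t).[x])).
Proof.
pose M k l := cint xn j (fun x => x ^+ (k + l)).
have E : (fun s => cint xn j (fun x => (V s).[x] ^+ 2 / 2)) =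
   (fun s => 2^-1 * \sum_(k < n) \sum_(l < n) (V s)`_k * (V s)`_l * M k l).
  apply/funext => s.
  under eq_fun do rewrite mulrC expr2.
  rewrite cintZ; last by apply: contM; apply: continuous_horner.
  by under eq_fun do rewrite (horner_coef_wide _ (hs s)); rewrite cint_bil.
rewrite E.
have -> : cint xn j (fun x => Vt.[x] * (V t).[x]) =
    \sum_(k < n) \sum_(l < n) Vt`_k * (V t)`_l * M k l.
  under eq_fun do rewrite (horner_coef_wide _ szVt) (horner_coef_wide _ (hs t)).
  by rewrite cint_bil.
have := @isdMc (fun s => \sum_(k < n) \sum_(l < n) (V s)`_k * (V s)`_l * M k l) 2^-1 t
   (\sum_(k < n) \sum_(l < n) (Vt`_k * (V t)`_l + (V t)`_k * Vt`_l) * M k l).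
move=> H; apply: isd_eq (H _); first by apply/funext => s; rewrite mulrC.
  rewrite mulrC.
  have -> : \sum_(k < n) \sum_(l < n) (Vt`_k * (V t)`_l + (V t)`_k * Vt`_l) * M k l =
     \sum_(k < n) \sum_(l < n) Vt`_k * (V t)`_l * M k l +
     \sum_(k < n) \sum_(l < n) Vt`_k * (V t)`_l * M k l.
    transitivity (\sum_(k < n) \sum_(l < n) Vt`_k * (V t)`_l * M k l +
       \sum_(k < n) \sum_(l < n) (V t)`_k * Vt`_l * M k l).
      rewrite -big_split; apply: eq_bigr => k _; rewrite -big_split.
      by apply: eq_bigr => l _; rewrite mulrDl.
    congr (_ + _); rewrite exchange_big; apply: eq_bigr => i _; apply: eq_bigr => l _.
    by rewrite /M addnC [Vt`_ _ * _]mulrC.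
  by move: (\sum_(k < n) _) => X; field.
apply: isdsum => k; apply: isdsum => l; apply: isdMc.
have := isdM _ _ _ _ _ (coef_isd k) (coef_isd l); apply: isd_eq => //.
Qed.
End PD.

Lemma contD (f g : R -> R) : continuous f -> continuous g ->
  continuous (fun x => f x + g x).
Proof. by move=> cf cg x; apply: cvgD; [exact: cf | exact: cg]. Qed.

Lemma cont_c (a b : R) (P : {poly R}) : continuous (fun x => cspeed a b P.[x]).
Proof.
have c2 (g : R -> R) : continuous g -> continuous (fun y => g y ^+ 2).
  move=> cg; under eq_fun do rewrite expr2; exact: contM.
have h1 : continuous (fun y : R => a * cos y ^+ 2 + b * sin y ^+ 2).
  apply: contD; apply: contM; try exact: cst_continuous; apply: c2.
    exact: continuous_cos.
  exact: continuous_sin.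
move=> x.
change (fun x => cspeed a b P.[x]) with
  (Num.sqrt \o ((fun y : R => a * cos y ^+ 2 + b * sin y ^+ 2) \o horner P)).
apply: continuous_comp; last exact: sqrt_continuous.
apply: continuous_comp; first exact: continuous_horner.
exact: h1.
Qed.

Lemma dval (f : R -> R) (t df : R) : is_derive t 1 f df -> derive1 f t = df.
Proof. by case=> _ h; rewrite derive1E. Qed.
End H.
Theorem proposition2p4 (R : realType) (alpha beta C theta T : R) (p N : nat)
  (xn : nat -> R) (v w psi : R -> 'I_N -> {poly R}) :
  0 < alpha -> 0 < beta -> 0 < C -> 1 / 2 <= theta ->
  (forall k : nat, (k < N)%N -> xn k < xn k.+1) ->
  (forall t, inX p (v t)) -> (forall t, inX p (w t)) -> (forall t, inX p (psi t)) ->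
  (forall t, 0 <= t <= T -> forall (j : 'I_N) (k : nat),
     derivable (fun s => (v s j)`_k) t 1 /\
     derivable (fun s => (w s j)`_k) t 1 /\
     derivable (fun s => (psi s j)`_k) t 1) ->
  (forall t, 0 <= t <= T -> forall phi : 'I_N -> {poly R}, inX p phi ->
     let c := cspeed alpha beta in
     let Fv := fun i => cbar alpha beta xn (psi t) i * avg xn (w t) i
                        + 1 / 2 * sspeed alpha beta xn (psi t) i * jump xn (v t) i in
     \sum_(j < N) cint xn j (fun x => dt v t j x * (phi j).[x])
     + \sum_(j < N) cint xn j (fun x => c (psi t j).[x] * (w t j).[x] * (deriv (phi j)).[x])
     - \sum_(j < N) Fv j * (phi j).[xn j.+1]
     + \sum_(j < N) Fv (ord_pred j) * (phi j).[xn j]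
     = \sum_(j < N) cint xn j (fun x => c (psi t j).[x] * (deriv (w t j * phi j)).[x])
       - \sum_(j < N) cbar alpha beta xn (psi t) j * (w t j).[xn j.+1] * (phi j).[xn j.+1]
       + \sum_(j < N) cbar alpha beta xn (psi t) (ord_pred j) * (w t j).[xn j] * (phi j).[xn j]
       - \sum_(j < N) eps alpha beta C theta xn v w psi t j
                      * cint xn j (fun x => (deriv (v t j)).[x] * (deriv (phi j)).[x])) ->
  (forall t, 0 <= t <= T -> forall eta : 'I_N -> {poly R}, inX p eta ->
     let c := cspeed alpha beta in
     let Fw := fun i => cbar alpha beta xn (psi t) i * avg xn (v t) i
                        + 1 / 2 * sspeed alpha beta xn (psi t) i * jump xn (w t) i in
     \sum_(j < N) cint xn j (fun x => dt w t j x * (eta j).[x])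
     + \sum_(j < N) cint xn j (fun x => c (psi t j).[x] * (v t j).[x] * (deriv (eta j)).[x])
     - \sum_(j < N) Fw j * (eta j).[xn j.+1]
     + \sum_(j < N) Fw (ord_pred j) * (eta j).[xn j]
     = - \sum_(j < N) eps alpha beta C theta xn v w psi t j
                      * cint xn j (fun x => (deriv (w t j)).[x] * (deriv (eta j)).[x])) ->
  (forall t, 0 <= t <= T -> forall zeta : 'I_N -> {poly R}, inX p zeta ->
     \sum_(j < N) cint xn j (fun x => dt psi t j x * (zeta j).[x])
     = \sum_(j < N) cint xn j (fun x => (v t j).[x] * (zeta j).[x])) ->
  forall t, 0 <= t <= T ->
    derivable (energy xn v w) t 1 /\ derive1 (energy xn v w) t <= 0.
Proof.
move=> ha hb hC hth hxn hiv hiw hip hder hv hw hpsi t ht.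
have hdv j k : derivable (fun s => (v s j)`_k) t 1 := (hder t ht j k).1.
have hdw j k : derivable (fun s => (w s j)`_k) t 1 := (hder t ht j k).2.1.
have hsv j s : (size (v s j) <= p.+1)%N := hiv s j.
have hsw j s : (size (w s j) <= p.+1)%N := hiw s j.
set VT := fun j => Vt R (fun s => v s j) p.+1 t.
set WT := fun j => Vt R (fun s => w s j) p.+1 t.
have csq (P : {poly R}) : continuous (fun x => P.[x] ^+ 2 / 2).
  apply: contM; last exact: cst_continuous.
  under eq_fun do rewrite expr2.
  by apply: contM; apply: continuous_horner.
have Eder : is_derive t 1 (energy xn v w)
   (\sum_(j < N) (cint xn j (fun x => (VT j).[x] * (v t j).[x])
                  + cint xn j (fun x => (WT j).[x] * (w t j).[x]))).
  have -> : energy xn v w = fun s => \sum_(j < N)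
     (cint xn j (fun x => (v s j).[x] ^+ 2 / 2) + cint xn j (fun x => (w s j).[x] ^+ 2 / 2)).
    apply/funext => s; rewrite /energy; apply: eq_bigr => j _.
    rewrite -cintD //; congr cint; apply/funext => x; by rewrite mulrDl.
  apply: isdsum => j; apply: isdD.
    exact: (@en_isd R N xn j _ _ t (hsv j) (hdv j)).
  exact: (@en_isd R N xn j _ _ t (hsw j) (hdw j)).
have hdtv j x : dt v t j x = (VT j).[x].
  by rewrite /dt; apply: dval; apply: (@hor_isd R _ _ t (hsv j) (hdv j)).
have hdtw j x : dt w t j x = (WT j).[x].
  by rewrite /dt; apply: dval; apply: (@hor_isd R _ _ t (hsw j) (hdw j)).
split; first by case: Eder.
rewrite (dval _ _ _ _ Eder).
move: (hv t ht (v t) (hiv t)) (hw t ht (w t) (hiw t)) => /= Hv Hw.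
set cb := cbar alpha beta xn (psi t) in Hv Hw *.
set sp := sspeed alpha beta xn (psi t) in Hv Hw *.
set cc := cspeed alpha beta in Hv Hw *.
have eA : \sum_(j < N) cint xn j (fun x => dt v t j x * (v t j).[x]) =
          \sum_(j < N) cint xn j (fun x => (VT j).[x] * (v t j).[x]).
  by apply: eq_bigr => j _; congr cint; apply/funext => x; rewrite hdtv.
have eB : \sum_(j < N) cint xn j (fun x => dt w t j x * (w t j).[x]) =
          \sum_(j < N) cint xn j (fun x => (WT j).[x] * (w t j).[x]).
  by apply: eq_bigr => j _; congr cint; apply/funext => x; rewrite hdtw.
have eI : \sum_(j < N) cint xn j (fun x => cc (psi t j).[x] * (w t j * v t j)^`().[x]) =
   \sum_(j < N) cint xn j (fun x => cc (psi t j).[x] * (w t j).[x] * (v t j)^`().[x]) +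
   \sum_(j < N) cint xn j (fun x => cc (psi t j).[x] * (v t j).[x] * (w t j)^`().[x]).
  rewrite -big_split; apply: eq_bigr => j _ /=.
  rewrite -cintD; last 2 first.
  - by apply: contM; [apply: contM; [apply: cont_c | apply: continuous_horner] | apply: continuous_horner].
  - by apply: contM; [apply: contM; [apply: cont_c | apply: continuous_horner] | apply: continuous_horner].
  congr cint; apply/funext => x.
  by rewrite derivM hornerD !hornerM; ring.
have e2 : \sum_(j < N) (cb (ord_pred j) * avg xn (w t) (ord_pred j) +
        1 / 2 * sp (ord_pred j) * jump xn (v t) (ord_pred j)) * (v t j).[xn j] =
    \sum_(i < N) (cb i * avg xn (w t) i + 1 / 2 * sp i * jump xn (v t) i) * trp xn (v t) i.
  by rewrite (reindex_inj (@ordS_inj N)); apply: eq_bigr => i _; rewrite ordSK.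
have e4 : \sum_(j < N) cb (ord_pred j) * (w t j).[xn j] * (v t j).[xn j] =
    \sum_(i < N) cb i * trp xn (w t) i * trp xn (v t) i.
  by rewrite (reindex_inj (@ordS_inj N)); apply: eq_bigr => i _; rewrite ordSK.
have e6 : \sum_(j < N) (cb (ord_pred j) * avg xn (v t) (ord_pred j) +
        1 / 2 * sp (ord_pred j) * jump xn (w t) (ord_pred j)) * (w t j).[xn j] =
    \sum_(i < N) (cb i * avg xn (v t) i + 1 / 2 * sp i * jump xn (w t) i) * trp xn (w t) i.
  by rewrite (reindex_inj (@ordS_inj N)); apply: eq_bigr => i _; rewrite ordSK.
have key :
  \sum_(j < N) (cb j * avg xn (w t) j + 1 / 2 * sp j * jump xn (v t) j) * (v t j).[xn j.+1]
  - \sum_(i < N) (cb i * avg xn (w t) i + 1 / 2 * sp i * jump xn (v t) i) * trp xn (v t) i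
  - \sum_(j < N) cb j * (w t j).[xn j.+1] * (v t j).[xn j.+1]
  + \sum_(i < N) cb i * trp xn (w t) i * trp xn (v t) i
  + \sum_(j < N) (cb j * avg xn (v t) j + 1 / 2 * sp j * jump xn (w t) j) * (w t j).[xn j.+1]
  - \sum_(i < N) (cb i * avg xn (v t) i + 1 / 2 * sp i * jump xn (w t) i) * trp xn (w t) i
  = \sum_(i < N) - (1 / 2 * sp i * (jump xn (v t) i ^+ 2 + jump xn (w t) i ^+ 2)).
  rewrite -sumrB -sumrB -big_split -big_split -sumrB /=.
  apply: eq_bigr => i _; rewrite /avg /jump /trm.
  by field.
have hf : \sum_(i < N) - (1 / 2 * sp i * (jump xn (v t) i ^+ 2 + jump xn (w t) i ^+ 2)) <= 0.
  rewrite sumrN oppr_le0; apply: sumr_ge0 => i _.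
  apply: mulr_ge0; last by apply: addr_ge0; apply: sqr_ge0.
  apply: mulr_ge0; first by [].
  by rewrite /sp /sspeed le_max sqrtr_ge0.
have heps j : 0 <= eps alpha beta C theta xn v w psi t j.
  rewrite /eps; apply: divr_ge0.
    apply: mulr_ge0; last exact: sqrtr_ge0.
    apply: mulr_ge0; last exact: ltW.
    by rewrite /dx subr_ge0 ltW // hxn // ltn_ord.
  by apply: addr_ge0; [exact: sqrtr_ge0 | exact: powR_ge0].
have hE (u : R -> 'I_N -> {poly R}) : 0 <= \sum_(j < N) eps alpha beta C theta xn v w psi t j *
       cint xn j (fun x => (u t j)^`().[x] * (u t j)^`().[x]).
  apply: sumr_ge0 => j _; apply: mulr_ge0 => //.
  by rewrite /cint; apply: Rintegral_ge0 => x _; rewrite -expr2 sqr_ge0.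
have hE1 := hE v. have hE2 := hE w.
rewrite big_split /=.
lra.
Qed.
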